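(* For every integer $t\ge1$, $$-\frac{1}{3t^2}<\frac{S_4(t)}{(-1)^t\binom{-3/2}{t}}-\frac{(-1)^t}{\binom{-3/2}{t}}\frac{\sinh\alpha}{\alpha}+\frac{\cosh\alpha}{2t}<\frac{13}{20t^2}.$$
   Context: $\alpha=\pi/6$. $(a)_m=a(a+1)\cdots(a+m-1)$ is the rising factorial ($(a)_0=1$); $\binom{x}{m}=x(x-1)\cdots(x-m+1)/m!$. For $t\ge0$, $$S_4(t)=\sum_{s=0}^t(-1)^s(1/2-s)_{s+1}\sum_{u=0}^s\frac{(-1)^u(-s)_u}{(s+u+1)!\,(2u)!}\left(\frac{\pi^2}{36}\right)^u.$$ *)

(* Defs.v *)
From Stdlib Require Import Reals Arith Factorial.
Open Scope R_scope.

Fixpoint rising (a : R) (m : nat) : R :=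
  match m with
  | O => 1
  | S k => rising a k * (a + INR k)
  end.

Fixpoint falling (x : R) (m : nat) : R :=
  match m with
  | O => 1
  | S k => falling x k * (x - INR k)
  end.

Definition gbinom (x : R) (m : nat) : R := falling x m / INR (fact m).

Definition alpha : R := PI / 6.

(* S_4(t) ; sum_f_R0 f n = f 0 + ... + f n *)
Definition S4 (t : nat) : R :=
  sum_f_R0 (fun s =>
    (-1) ^ s * rising (1/2 - INR s) (s + 1) *
    sum_f_R0 (fun u =>
      (-1) ^ u * rising (- INR s) u
        / (INR (fact (s + u + 1)) * INR (fact (2 * u)))
        * (PI ^ 2 / 36) ^ u) s) t.

(* Main.v *)
Require Import Defs.
From Stdlib Require Import Reals Lra Lia Arith Factorial ZArith.
Open Scope R_scope.

Fixpoint sm (f : nat -> R) (n : nat) : R :=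
  match n with O => 0 | S m => sm f m + f m end.

Lemma sm_ext f g n : (forall k, (k < n)%nat -> f k = g k) -> sm f n = sm g n.
Proof. induction n; simpl; intros H; auto. rewrite IHn by (intros; apply H; lia). rewrite H by lia. auto. Qed.

Lemma sm_plus f g n : sm (fun k => f k + g k) n = sm f n + sm g n.
Proof. induction n; simpl; [lra|rewrite IHn; lra]. Qed.

Lemma sm_scal a f n : sm (fun k => a * f k) n = a * sm f n.
Proof. induction n; simpl; [lra|rewrite IHn; lra]. Qed.

Lemma sm_shift f n : sm f (S n) = f O + sm (fun k => f (S k)) n.
Proof. induction n; simpl in *; [lra|rewrite IHn; lra]. Qed.

Lemma sm_le f g n : (forall k, (k < n)%nat -> f k <= g k) -> sm f n <= sm g n.
Proof. induction n; simpl; intros H; [lra|]. assert (f n <= g n) by (apply H; lia).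
 assert (sm f n <= sm g n) by (apply IHn; intros; apply H; lia). lra. Qed.

Lemma sm_nonneg f n : (forall k, (k < n)%nat -> 0 <= f k) -> 0 <= sm f n.
Proof. intros H. replace 0 with (sm (fun _ => 0) n). apply sm_le; auto.
 induction n; simpl; auto. rewrite IHn; [lra|intros; apply H; lia]. Qed.

Lemma sm_abs f n : Rabs (sm f n) <= sm (fun k => Rabs (f k)) n.
Proof. induction n; simpl. rewrite Rabs_R0; lra.
 eapply Rle_trans. apply Rabs_triang. lra. Qed.

Lemma sm_split f n m : sm f (n + m) = sm f n + sm (fun i => f (n + i)%nat) m.
Proof. induction m; simpl. rewrite Nat.add_0_r; lra. rewrite Nat.add_succ_r; simpl. rewrite IHm; lra. Qed.

Lemma sum_f_R0_sm f n : sum_f_R0 f n = sm f (S n).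
Proof. induction n; [simpl; lra|]. change (sum_f_R0 f (S n)) with (sum_f_R0 f n + f (S n)). rewrite IHn. reflexivity. Qed.

Lemma rising_front a m : rising a (S m) = a * rising (a + 1) m.
Proof. induction m. simpl; ring. change (rising a (S (S m))) with (rising a (S m) * (a + INR (S m))).
 rewrite IHm. change (rising (a+1) (S m)) with (rising (a+1) m * (a + 1 + INR m)). rewrite S_INR. ring. Qed.

Lemma rising_pos a m : 0 < a -> 0 < rising a m.
Proof. intros Ha; induction m; simpl; [lra|]. apply Rmult_lt_0_compat; auto. pose proof (pos_INR m); lra. Qed.

Lemma rising_ge1 a m : 1 <= a -> 1 <= rising a m.
Proof. intros Ha; induction m; simpl; [lra|]. pose proof (pos_INR m). nra. Qed.

Lemma rising_zero m u : (m < u)%nat -> rising (- INR m) u = 0.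
Proof. induction u; intros H. lia. simpl. destruct (Nat.eq_dec m u). subst; ring.
 rewrite IHu by lia. ring. Qed.

Lemma rising_one u : rising 1 u = INR (fact u).
Proof. induction u. simpl; auto.
 change (rising 1 (S u)) with (rising 1 u * (1 + INR u)).
 rewrite IHu. rewrite fact_simpl, mult_INR, S_INR. ring. Qed.

Fixpoint binom (n k : nat) : R :=
  match n, k with
  | _, O => 1
  | O, S _ => 0
  | S n', S k' => binom n' k' + binom n' (S k')
  end.

Lemma binom_zero n k : (n < k)%nat -> binom n k = 0.
Proof. revert k; induction n; intros k H; destruct k; try lia; simpl; auto.
 rewrite !IHn by lia. lra. Qed.

Lemma binom_nonneg n k : 0 <= binom n k.
Proof. revert k; induction n; intros k; destruct k; simpl; try lra.
 pose proof (IHn k); pose proof (IHn (S k)); lra. Qed.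

Lemma binom_n0 n : binom n 0 = 1.
Proof. destruct n; reflexivity. Qed.

Lemma chu_vdm n : forall b c, 0 < c ->
  sm (fun k => (-1)^k * binom n k * rising b k / rising c k) (S n)
  = rising (c - b) n / rising c n.
Proof.
  induction n; intros b c Hc.
  - simpl. field.
  - set (g := fun k => (-1)^k * binom n k * rising b k / rising c k).
    set (h := fun k => (-1)^k * binom n k * rising (b+1) k / rising (c+1) k).
    assert (Hc1 : 0 < c + 1) by lra.
    assert (E1 : sm (fun k => (-1)^k * binom (S n) k * rising b k / rising c k) (S (S n))
               = 1 + (- (b / c) * sm h (S n) + sm (fun k => g (S k)) (S n))).
    { rewrite sm_shift. simpl ((-1)^0). 
      replace (1 * binom (S n) 0 * rising b 0 / rising c 0) with 1 by (simpl; field).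
      f_equal. rewrite <- sm_scal, <- sm_plus. apply sm_ext. intros k _.
      unfold g, h. rewrite !rising_front. simpl binom. simpl pow.
      pose proof (rising_pos c (S k) Hc) as P1. rewrite rising_front in P1.
      pose proof (rising_pos (c+1) k Hc1).
      assert (c <> 0) by lra. assert (rising (c+1) k <> 0) by lra. field; auto. }
    assert (E2 : sm (fun k => g (S k)) (S n) = sm g (S n) - 1).
    { pose proof (sm_shift g (S n)) as H.
      change (sm g (S (S n))) with (sm g (S n) + g (S n)) in H.
      assert (g (S n) = 0) by (unfold g; rewrite binom_zero by lia; lra).
      assert (g O = 1) by (unfold g; rewrite binom_n0; simpl; field). lra. }
    rewrite E1, E2. unfold h, g. rewrite (IHn b c Hc), (IHn (b+1) (c+1) Hc1).
    replace (c + 1 - (b + 1)) with (c - b) by ring.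
    rewrite (rising_front c n).
    change (rising (c-b) (S n)) with (rising (c-b) n * (c - b + INR n)).
    change (rising c (S n)) with (rising c n * (c + INR n)).
    assert (X : c * rising (c+1) n = rising c n * (c + INR n)).
    { rewrite <- rising_front. reflexivity. }
    pose proof (rising_pos (c+1) n Hc1). pose proof (pos_INR n).
    assert (rising c n = c * rising (c+1) n / (c + INR n)) by (rewrite X; field; lra).
    rewrite H1. field. repeat split; lra.
Qed.

Fixpoint cc (s : nat) : R :=
  match s with O => 1 | S m => cc m * (2 * INR m + 1) / (2 * INR m + 2) end.

Lemma cc_S s : cc (S s) = cc s * (2 * INR s + 1) / (2 * INR s + 2).
Proof. reflexivity. Qed.

Lemma cc_pos s : 0 < cc s.
Proof. induction s; simpl; [lra|]. pose proof (pos_INR s).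
 apply Rmult_lt_0_compat; [apply Rmult_lt_0_compat|apply Rinv_0_lt_compat]; lra. Qed.

Lemma cc_rising s : rising (1/2) s = cc s * INR (fact s).
Proof. induction s. simpl; lra.
 change (rising (1/2) (S s)) with (rising (1/2) s * (1/2 + INR s)).
 rewrite IHs, cc_S, fact_simpl, mult_INR, S_INR. pose proof (pos_INR s). field. lra. Qed.

Lemma cc_sq s : cc s ^ 2 * (2 * INR s + 1) <= 1.
Proof. induction s. simpl; lra. rewrite cc_S, S_INR. pose proof (pos_INR s).
 pose proof (cc_pos s).
 assert (cc s * (2 * INR s + 1) / (2 * INR s + 2) = cc s * ((2 * INR s + 1) / (2 * INR s + 2))) as ->
   by (field; lra).
 set (q := (2 * INR s + 1) / (2 * INR s + 2)).
 assert (q * (2 * INR s + 2) = 2 * INR s + 1) by (unfold q; field; lra).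
 assert (0 <= q) by (unfold q; apply Rmult_le_pos; [lra| left; apply Rinv_0_lt_compat; lra]).
 assert (q ^ 2 * (2 * (INR s + 1) + 1) <= 2 * INR s + 1).
 { assert (q*q*(2*INR s+2)^2 = (2*INR s+1)^2) by (rewrite <- H1; ring). nra. }
 replace ((cc s * q) ^ 2 * (2 * (INR s + 1) + 1)) with (cc s ^ 2 * (q ^ 2 * (2 * (INR s + 1) + 1))) by ring.
 apply Rle_trans with (cc s ^ 2 * (2 * INR s + 1)); auto.
 apply Rmult_le_compat_l; auto. apply pow2_ge_0. Qed.

Lemma cc_tel s : cc s / (INR s + 1) = 2 * (cc s - cc (S s)).
Proof. rewrite cc_S. pose proof (pos_INR s). field. lra. Qed.

Lemma cc_dec s : cc (S s) <= cc s.
Proof. rewrite cc_S. pose proof (pos_INR s). pose proof (cc_pos s).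
 apply Rmult_le_reg_r with (2 * INR s + 2). lra. unfold Rdiv. rewrite Rmult_assoc, Rinv_l by lra. nra. Qed.

Definition pi_ (u s : nat) : R := rising (INR s + 1 - INR u) u / rising (INR s + 2) u.
Definition w (u s : nat) : R := pi_ u s / (INR s + 1).

Lemma pi_S u s : pi_ (S u) s = pi_ u s * (INR s - INR u) / (INR s + INR u + 2).
Proof. unfold pi_. rewrite rising_front, S_INR.
 change (rising (INR s + 2) (S u)) with (rising (INR s + 2) u * (INR s + 2 + INR u)).
 replace (INR s + 1 - (INR u + 1) + 1) with (INR s + 1 - INR u) by ring.
 pose proof (pos_INR s). pose proof (pos_INR u). pose proof (rising_pos (INR s + 2) u ltac:(lra)).
 field. lra. Qed.

Lemma pi_zero u s : (s < u)%nat -> pi_ u s = 0.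
Proof. intros H. unfold pi_. replace (INR s + 1 - INR u) with (- INR (u - s - 1)).
 rewrite rising_zero by lia. lra.
 rewrite !minus_INR by lia. simpl. lra. Qed.

Lemma pi_bounds_le u s : (u <= s)%nat ->
  0 <= pi_ u s <= 1 /\ 1 - INR u * (INR u + 1) / (INR s + 1) <= pi_ u s.
Proof. induction u; intros H.
 - unfold pi_. simpl. split; [lra|]. unfold Rdiv. rewrite Rmult_0_l. lra.
 - destruct (IHu ltac:(lia)) as [[A B] C]. rewrite pi_S. rewrite S_INR.
   assert (Hu : INR u + 1 <= INR s) by (rewrite <- S_INR; apply le_INR; lia).
   pose proof (pos_INR u).
   set (f := (INR s - INR u) / (INR s + INR u + 2)).
   assert (Hf : f * (INR s + INR u + 2) = INR s - INR u) by (unfold f; field; lra).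
   assert (0 <= f <= 1) by (split; nra).
   assert (1 - f <= (2 * INR u + 2) / (INR s + 1)).
   { apply Rmult_le_reg_r with (INR s + 1). lra. unfold Rdiv. rewrite Rmult_assoc, Rinv_l by lra. nra. }
   replace (pi_ u s * (INR s - INR u) / (INR s + INR u + 2)) with (pi_ u s * f) by (unfold f; field; lra).
   split; [split; nra|].
   assert ((INR u + 1) * (INR u + 1 + 1) / (INR s + 1) = INR u * (INR u + 1) / (INR s + 1) + (2 * INR u + 2) / (INR s + 1)) by (field; lra).
   nra.
Qed.

Lemma pi_bounds u s :
  0 <= pi_ u s <= 1 /\ 1 - INR u * (INR u + 1) / (INR s + 1) <= pi_ u s.
Proof. destruct (le_lt_dec u s). apply pi_bounds_le; auto.
 rewrite pi_zero by auto. pose proof (pos_INR s).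
 assert (INR s + 1 <= INR u) by (rewrite <- S_INR; apply le_INR; lia).
 split; [lra|]. assert (INR u * (INR u + 1) / (INR s + 1) >= 1).
 { apply Rle_ge. apply Rmult_le_reg_r with (INR s + 1). lra. unfold Rdiv. rewrite Rmult_assoc, Rinv_l by lra. nra. }
 lra. Qed.

Definition Q (u n : nat) : R :=
  2 * sm (fun k => (-1)^k * binom u k * rising (INR u + 1) k
                   / ((2 * INR k + 1) * rising (INR n + 1) k)) (S u).

Lemma wz_step u n : w u n = Q u n - (2 * INR n + 1) / (2 * INR n + 2) * Q u (S n).
Proof.
  unfold Q. rewrite S_INR.
  match goal with |- _ = 2 * sm ?f ?n - ?a * (2 * sm ?g ?n) => 
    replace (2 * sm f n - a * (2 * sm g n)) with (sm (fun k => 2 * f k + (- a * 2) * g k) n)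
      by (rewrite sm_plus, !sm_scal; ring) end.
  transitivity (sm (fun k => / (INR n + 1) * ((-1)^k * binom u k * rising (INR u + 1) k / rising (INR n + 2) k)) (S u)).
  2: { apply sm_ext. intros k _. pose proof (pos_INR n). pose proof (pos_INR k).
       assert (X : rising (INR n + 1) (S k) = rising (INR n + 1) k * (INR n + 1 + INR k)) by reflexivity.
       rewrite rising_front in X. replace (INR n + 1 + 1) with (INR n + 2) in X by ring.
       replace (INR n + 1 + 1) with (INR n + 2) by ring.
       pose proof (rising_pos (INR n + 2) k ltac:(lra)).
       pose proof (rising_pos (INR n + 1) k ltac:(lra)).
       assert (rising (INR n + 1) k = (INR n + 1) * rising (INR n + 2) k / (INR n + 1 + INR k)) by (rewrite X; field; lra).
       rewrite H3. field. repeat split; lra. }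
  rewrite sm_scal. rewrite chu_vdm by (pose proof (pos_INR n); lra).
  unfold w, pi_. replace (INR n + 2 - (INR u + 1)) with (INR n + 1 - INR u) by ring.
  pose proof (pos_INR n). pose proof (rising_pos (INR n + 2) u ltac:(lra)). field. lra.
Qed.

Definition A (u n : nat) : R := sm (fun s => cc s * w u s) n.

Lemma A_zero u n : (n <= u)%nat -> A u n = 0.
Proof. intros H. unfold A. transitivity (sm (fun _ => 0) n).
 apply sm_ext. intros k Hk. unfold w. rewrite pi_zero by lia. unfold Rdiv; ring.
 clear H; induction n; simpl; auto; rewrite IHn; ring. Qed.

Lemma Q_base u : cc u * Q u u = 2 / (2 * INR u + 1).
Proof.
  unfold Q. rewrite (sm_ext _ (fun k => (-1)^k * binom u k * rising (1/2) k / rising (3/2) k)).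
  2: { intros k _.
    pose proof (rising_pos (INR u + 1) k ltac:(pose proof (pos_INR u); lra)).
    assert (E : rising (1/2) k * (1/2 + INR k) = 1/2 * rising (1/2 + 1) k).
    { rewrite <- rising_front. reflexivity. }
    replace (1/2+1) with (3/2) in E by field.
    pose proof (rising_pos (3/2) k ltac:(lra)). pose proof (pos_INR k).
    assert (R3 : rising (3/2) k = rising (1/2) k * (2 * INR k + 1)) by lra.
    rewrite R3. pose proof (rising_pos (1/2) k ltac:(lra)). field. repeat split; lra. }
  rewrite chu_vdm by lra. replace (3/2 - 1/2) with 1 by field.
  rewrite rising_one.
  assert (E : rising (1/2) u * (1/2 + INR u) = 1/2 * rising (1/2 + 1) u).
  { rewrite <- rising_front. reflexivity. }
  replace (1/2+1) with (3/2) in E by field.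
  pose proof (rising_pos (3/2) u ltac:(lra)). pose proof (pos_INR u).
  rewrite cc_rising in E. pose proof (INR_fact_lt_0 u).
  assert (rising (3/2) u = 2 * cc u * INR (fact u) * (1/2 + INR u)) by lra.
  rewrite H2. field. pose proof (cc_pos u). repeat split; lra.
Qed.

Lemma A_closed u m : A u (u + m) = 2 / (2 * INR u + 1) - cc (u + m) * Q u (u + m).
Proof. induction m.
 - rewrite Nat.add_0_r. rewrite A_zero by lia. rewrite Q_base. ring.
 - rewrite Nat.add_succ_r. unfold A. simpl sm. fold (A u (u+m)). rewrite IHm.
   rewrite (wz_step u (u+m)). rewrite cc_S. pose proof (pos_INR (u+m)). pose proof (pos_INR u). field. repeat split; lra.
Qed.

Lemma sm_minus f g n : sm (fun k => f k - g k) n = sm f n - sm g n.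
Proof. induction n; simpl; [lra|rewrite IHn; lra]. Qed.

Definition K (u : nat) : R := 2 * sm (fun k => binom u k * rising (INR u + 1) k) (S u).

Lemma K_nonneg u : 0 <= K u.
Proof. unfold K. apply Rmult_le_pos; [lra|]. apply sm_nonneg. intros.
 apply Rmult_le_pos. apply binom_nonneg. left; apply rising_pos. pose proof (pos_INR u); lra. Qed.

Lemma Q_bound u n : Rabs (Q u n) <= K u.
Proof. unfold Q, K. rewrite Rabs_mult, Rabs_right by lra. apply Rmult_le_compat_l; [lra|].
 eapply Rle_trans. apply sm_abs. apply sm_le. intros k _.
 pose proof (pos_INR k). pose proof (pos_INR n). pose proof (pos_INR u).
 pose proof (rising_ge1 (INR n + 1) k ltac:(lra)).
 pose proof (rising_pos (INR u + 1) k ltac:(lra)). pose proof (binom_nonneg u k).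
 unfold Rdiv. rewrite !Rabs_mult. rewrite pow_1_abs. rewrite (Rabs_right (binom u k)) by lra. rewrite (Rabs_right (rising _ k)) by lra.
 rewrite Rabs_right. 2: { left; apply Rinv_0_lt_compat. apply Rmult_lt_0_compat; lra. }
 rewrite Rmult_1_l. rewrite <- (Rmult_1_r (binom u k * rising (INR u + 1) k)) at 2.
 apply Rmult_le_compat_l. apply Rmult_le_pos; lra.
 assert (Hr : 1 <= (2 * INR k + 1) * rising (INR n + 1) k) by nra.
 apply (Rinv_le_contravar 1) in Hr; [rewrite Rinv_1 in Hr; exact Hr | lra]. Qed.

Lemma cc_small eps : 0 < eps -> exists N0, forall N, (N0 <= N)%nat -> cc N < eps.
Proof. intros He. destruct (archimed (/ (eps*eps))) as [H1 _].
 assert (0 <= IZR (up (/ (eps * eps)))).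
 { left. eapply Rlt_trans; [|apply H1]. apply Rinv_0_lt_compat. nra. }
 exists (Z.to_nat (up (/ (eps * eps)))). intros N HN.
 apply le_INR in HN. rewrite INR_IZR_INZ, Z2Nat.id in HN.
 2: { apply le_IZR. auto. }
 pose proof (cc_sq N). pose proof (cc_pos N).
 assert (/ (eps*eps) < 2 * INR N + 1) by lra.
 assert (1 < eps * eps * (2 * INR N + 1)).
 { apply Rmult_lt_reg_l with (/ (eps*eps)). apply Rinv_0_lt_compat; nra.
   rewrite <- Rmult_assoc, Rinv_l by nra. lra. }
 destruct (Rlt_le_dec (cc N) eps) as [|Hc]; auto.
 exfalso. pose proof (pos_INR N). assert (eps * eps <= cc N ^ 2) by nra. nra. Qed.

Lemma le_eps X Y : (forall e, 0 < e -> X <= Y + e) -> X <= Y.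
Proof. intros H. destruct (Rle_dec X Y); auto. specialize (H ((X - Y)/2)). lra. Qed.

Lemma A_split u n m : A u (n + m) = A u n + sm (fun i => cc (n+i) * w u (n+i)) m.
Proof. unfold A. apply sm_split. Qed.

Lemma tel F n m : sm (fun i => F (n+i)%nat - F (S (n+i))) m = F n - F (n + m)%nat.
Proof. induction m; simpl. rewrite Nat.add_0_r; ring. rewrite IHm. rewrite Nat.add_succ_r. ring. Qed.

Lemma sum1 n m : sm (fun i => cc (n+i) / (INR (n+i) + 1)) m = 2 * (cc n - cc (n + m)).
Proof. rewrite (sm_ext _ (fun i => 2 * (cc (n+i) - cc (S (n+i))))). rewrite sm_scal, tel. auto.
 intros. apply cc_tel. Qed.

Lemma sum2 n m : (1 <= n)%nat ->
  sm (fun i => cc (n+i) / (INR (n+i) + 1)^2) m <= 2/3 * (cc n / INR n).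
Proof. intros Hn.
 apply Rle_trans with (sm (fun i => 2/3 * ((fun j => cc j / INR j) (n+i)%nat - (fun j => cc j / INR j) (S (n+i)))) m).
 - apply sm_le. intros i _. cbv beta. rewrite cc_S, S_INR.
   assert (1 <= INR (n+i)) by (replace 1 with (INR 1) by reflexivity; apply le_INR; lia).
   pose proof (cc_pos (n+i)). set (s := INR (n+i)) in *. set (c := cc (n+i)) in *.
   assert (E : 2 / 3 * (c / s - c * (2 * s + 1) / (2 * s + 2) / (s + 1)) = c * (3*s+2) / (3 * s * (s+1)^2)) by (field; lra).
   rewrite E.
   assert (E2 : c * (3*s+2) / (3 * s * (s+1)^2) = c / (s+1)^2 + c * 2 / (3 * s * (s+1)^2)) by (field; lra).
   rewrite E2. assert (0 <= c * 2 / (3 * s * (s+1)^2)).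
   { apply Rmult_le_pos. lra. left; apply Rinv_0_lt_compat. apply Rmult_lt_0_compat. lra. apply pow_lt; lra. }
   lra.
 - rewrite sm_scal, (tel (fun j => cc j / INR j)). apply Rmult_le_compat_l. lra.
   assert (0 < INR (n+m)) by (apply lt_0_INR; lia). pose proof (cc_pos (n+m)).
   assert (0 <= cc (n+m) / INR (n+m)) by (apply Rmult_le_pos; [lra|left; apply Rinv_0_lt_compat; lra]). lra.
Qed.

Definition T (u n : nat) : R := 2 / (2 * INR u + 1) - A u n.

Lemma T_far u n m : (u <= n + m)%nat ->
  T u n = cc (n+m) * Q u (n+m) + sm (fun i => cc (n+i) * w u (n+i)) m.
Proof. intros H. unfold T. pose proof (A_split u n m).
 replace (n + m)%nat with (u + (n + m - u))%nat in H0 at 1 by lia.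
 rewrite A_closed in H0. replace (u + (n + m - u))%nat with (n + m)%nat in H0 by lia. lra. Qed.

Lemma T_upper u n : T u n <= 2 * cc n.
Proof. apply le_eps. intros e He.
 destruct (cc_small (e / (K u + 1))) as [N0 HN0].
 { apply Rdiv_lt_0_compat; auto. pose proof (K_nonneg u); lra. }
 rewrite (T_far u n (N0 + u)) by lia.
 pose proof (HN0 (n + (N0 + u))%nat ltac:(lia)).
 pose proof (Q_bound u (n + (N0+u))). pose proof (Rle_abs (Q u (n + (N0 + u)))).
 pose proof (K_nonneg u). pose proof (cc_pos (n + (N0 + u))).
 assert (cc (n + (N0 + u)) * Q u (n + (N0 + u)) <= e).
 { apply Rle_trans with (cc (n + (N0 + u)) * (K u + 1)). apply Rmult_le_compat_l; lra.
   apply Rmult_le_reg_r with (/ (K u + 1)). apply Rinv_0_lt_compat; lra.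
   rewrite Rmult_assoc, Rinv_r by lra. lra. }
 assert (sm (fun i => cc (n+i) * w u (n+i)) (N0+u) <= 2 * cc n).
 { apply Rle_trans with (sm (fun i => cc (n+i) / (INR (n+i) + 1)) (N0+u)).
   - apply sm_le. intros i _. unfold w. destruct (pi_bounds u (n+i)) as [[B1 B2] _].
     pose proof (cc_pos (n+i)). pose proof (pos_INR (n+i)).
     unfold Rdiv. rewrite <- Rmult_assoc. apply Rmult_le_compat_r. left; apply Rinv_0_lt_compat; lra. nra.
   - rewrite sum1. pose proof (cc_pos (n + (N0+u))). lra. }
 lra. Qed.

Lemma T_lower u n : (1 <= n)%nat ->
  2 * cc n - 2/3 * (INR u * (INR u + 1)) * (cc n / INR n) <= T u n.
Proof. intros Hn. apply le_eps. intros e He.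
 destruct (cc_small (e / (K u + 3))) as [N0 HN0].
 { apply Rdiv_lt_0_compat; auto. pose proof (K_nonneg u); lra. }
 rewrite (T_far u n (N0 + u)) by lia.
 set (N := (n + (N0 + u))%nat).
 pose proof (HN0 N ltac:(unfold N; lia)).
 pose proof (Q_bound u N). assert (HB : - K u <= Q u N) by (unfold Rabs in H0; destruct (Rcase_abs (Q u N)); lra).
 pose proof (K_nonneg u). pose proof (cc_pos N).
 assert (- e <= cc N * Q u N - 2 * cc N).
 { assert (cc N * (K u + 3) <= e).
   { apply Rmult_le_reg_r with (/ (K u + 3)). apply Rinv_0_lt_compat; lra.
     rewrite Rmult_assoc, Rinv_r by lra. lra. }
   nra. }
 set (U := INR u * (INR u + 1)).
 assert (HU : 0 <= U) by (unfold U; pose proof (pos_INR u); nra).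
 assert (2 * (cc n - cc N) - U * (2/3 * (cc n / INR n)) <= sm (fun i => cc (n+i) * w u (n+i)) (N0+u)).
 { pose proof (sum1 n (N0+u)) as S1. fold N in S1. rewrite <- S1.
   apply Rle_trans with (sm (fun i => cc (n+i) / (INR (n+i) + 1)) (N0 + u) - U * sm (fun i => cc (n+i) / (INR (n+i) + 1)^2) (N0+u)).
   { pose proof (sum2 n (N0+u) Hn). nra. }
   rewrite <- sm_scal, <- sm_minus.
   apply sm_le. intros i _. unfold w. destruct (pi_bounds u (n+i)) as [_ B3]. fold U in B3.
   pose proof (cc_pos (n+i)). pose proof (pos_INR (n+i)).
   set (s := INR (n+i)) in *. set (c := cc (n+i)) in *.
   assert (E : c / (s + 1) - U * (c / (s + 1) ^ 2) = c * (1 - U / (s+1)) / (s+1)) by (field; lra).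
   rewrite E. unfold Rdiv. rewrite <- !Rmult_assoc. apply Rmult_le_compat_r.
   left; apply Rinv_0_lt_compat; lra. apply Rmult_le_compat_l; lra. }
 assert (0 < INR n) by (apply lt_0_INR; lia).
 lra. Qed.

Lemma exp_cv x : Un_cv (fun m => sm (fun i => / INR (fact i) * x ^ i) (S m)) (exp x).
Proof. intros e He. destruct (proj2_sig (exist_exp x) e He) as [N HN]. exists N. intros m Hm.
 rewrite <- sum_f_R0_sm. apply HN. auto. Qed.

Lemma cv_sub U l : Un_cv U l -> Un_cv (fun N => U (S (2 * N))) l.
Proof. intros H e He. destruct (H e He) as [N HN]. exists N. intros m Hm. apply HN. lia. Qed.

Lemma cv_scal U l c : Un_cv U l -> Un_cv (fun N => c * U N) (c * l).
Proof. intros H. apply CV_mult; auto. intros e He. exists O. intros. unfold Rdist. rewrite Rminus_diag, Rabs_R0. lra. Qed.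

Definition xx := PI ^ 2 / 36.
Definition a (u : nat) : R := xx ^ u / INR (fact (2 * u)).

Lemma alpha_pos : 0 < alpha.
Proof. unfold alpha. pose proof PI_RGT_0. lra. Qed.

Lemma alpha_sq u : alpha ^ (2 * u) = xx ^ u.
Proof. rewrite pow_mult. unfold xx, alpha. f_equal. field. Qed.

Lemma neg_pow y i : (- y) ^ i = (-1) ^ i * y ^ i.
Proof. replace (- y) with (-1 * y) by ring. apply Rpow_mult_distr. Qed.

Lemma even_odd_sums N :
  sm (fun i => / INR (fact i) * alpha ^ i) (S (S (2 * N))) + sm (fun i => / INR (fact i) * (- alpha) ^ i) (S (S (2 * N)))
  = 2 * sm a (S N) /\
  sm (fun i => / INR (fact i) * alpha ^ i) (S (S (2 * N))) - sm (fun i => / INR (fact i) * (- alpha) ^ i) (S (S (2 * N)))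
  = 2 * alpha * sm (fun u => a u / (2 * INR u + 1)) (S N).
Proof.
  induction N.
  - simpl. unfold a. simpl. unfold xx, alpha. split; field.
  - destruct IHN as [I1 I2].
    replace (S (S (2 * S N))) with (S (S (S (S (2 * N))))) by lia.
    change (sm ?f (S (S (S (S ?k))))) with (sm f (S (S k)) + f (S (S k)) + f (S (S (S k)))).
    change (sm a (S (S N))) with (sm a (S N) + a (S N)).
    change (sm (fun u => a u / (2 * INR u + 1)) (S (S N))) with (sm (fun u => a u / (2 * INR u + 1)) (S N) + a (S N) / (2 * INR (S N) + 1)).
    cbv beta.
    assert (F1 : (- alpha) ^ (S (S (2 * N))) = alpha ^ (S (S (2 * N)))).
    { rewrite neg_pow. replace (S (S (2 * N))) with (2 * S N)%nat by lia. rewrite pow_1_even. ring. }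
    assert (F2 : (- alpha) ^ (S (S (S (2 * N)))) = - alpha ^ (S (S (S (2 * N))))).
    { rewrite neg_pow. replace (S (S (S (2 * N)))) with (S (2 * S N))%nat by lia. rewrite pow_1_odd. ring. }
    rewrite F1, F2.
    assert (F3 : a (S N) = alpha ^ (S (S (2 * N))) / INR (fact (S (S (2 * N))))).
    { unfold a. rewrite <- alpha_sq. replace (2 * S N)%nat with (S (S (2 * N))) by lia. reflexivity. }
    rewrite F3.
    change (alpha ^ (S (S (S (2 * N))))) with (alpha * alpha ^ (S (S (2 * N)))).
    rewrite (fact_simpl (S (S (2 * N)))), mult_INR.
    replace (INR (S (S (S (2 * N))))) with (2 * INR (S N) + 1) by (rewrite !S_INR, mult_INR, S_INR; simpl; ring).
    pose proof (INR_fact_lt_0 (S (S (2 * N)))). pose proof alpha_pos. pose proof (pos_INR (S N)).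
    set (S1 := sm (fun i : nat => / INR (fact i) * alpha ^ i) (S (S (2 * N)))) in *.
    set (S2 := sm (fun i : nat => / INR (fact i) * (- alpha) ^ i) (S (S (2 * N)))) in *.
    assert (E1 : sm a (S N) = (S1 + S2) / 2) by lra.
    assert (E2 : sm (fun u => a u / (2 * INR u + 1)) (S N) = (S1 - S2) / (2 * alpha)) by (rewrite I2; field; lra).
    rewrite E1, E2.
    split; field; lra.
Qed.

Lemma cv_ext U V l : (forall N, U N = V N) -> Un_cv U l -> Un_cv V l.
Proof. intros H C e He. destruct (C e He) as [N HN]. exists N. intros. rewrite <- H. auto. Qed.

Lemma ch_cv : Un_cv (fun N => sm a (S N)) (cosh alpha).
Proof.
  pose proof (cv_scal _ _ (/2) (cv_sub _ _ (CV_plus _ _ _ _ (exp_cv alpha) (exp_cv (- alpha))))) as H.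
  unfold cosh. replace ((exp alpha + exp (- alpha)) / 2) with (/2 * (exp alpha + exp (- alpha))) by field.
  eapply cv_ext; [|exact H]. intros N. cbv beta. destruct (even_odd_sums N) as [E _]. rewrite E. field.
Qed.

Lemma sh_cv : Un_cv (fun N => sm (fun u => a u / (2 * INR u + 1)) (S N)) (sinh alpha / alpha).
Proof.
  pose proof alpha_pos.
  pose proof (cv_scal _ _ (/(2 * alpha)) (cv_sub _ _ (CV_minus _ _ _ _ (exp_cv alpha) (exp_cv (- alpha))))) as H1.
  unfold sinh. replace ((exp alpha - exp (- alpha)) / 2 / alpha) with (/(2 * alpha) * (exp alpha - exp (- alpha))) by (field; lra).
  eapply cv_ext; [|exact H1]. intros N. cbv beta. destruct (even_odd_sums N) as [_ E]. rewrite E. field. lra.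
Qed.

Lemma lim_le U V l m N1 : Un_cv U l -> Un_cv V m -> (forall N, (N1 <= N)%nat -> U N <= V N) -> l <= m.
Proof.
  intros HU HV H. destruct (Rle_dec l m) as [|Hn]; auto. exfalso.
  set (e := (l - m) / 2). assert (0 < e) by (unfold e; lra).
  destruct (HU e H0) as [Na HNa]. destruct (HV e H0) as [Nb HNb].
  set (N := (N1 + Na + Nb)%nat).
  specialize (HNa N ltac:(unfold N; lia)). specialize (HNb N ltac:(unfold N; lia)). specialize (H N ltac:(unfold N; lia)).
  unfold Rdist in *. apply Rabs_def2 in HNa. apply Rabs_def2 in HNb. unfold e in *. lra.
Qed.

Lemma PI_ub : PI <= 68 / 21.
Proof. destruct (PI_2_3_7_ineq 0) as [_ H]. simpl in H. unfold tg_alt, PI_2_3_7_tg, Ratan_seq in H. simpl in H. lra. Qed.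

Lemma xx_bounds : 0 < xx <= 4624 / 15876.
Proof. unfold xx. pose proof PI_ub. pose proof PI_RGT_0. split. nra.
 assert (PI ^ 2 <= (68/21)^2) by (simpl; nra). lra. Qed.

Lemma geom f r N : (forall u, 0 <= f u) -> 0 <= r < 1 -> (forall u, (1 <= u)%nat -> f (S u) <= r * f u) ->
  sm f (S N) <= f O + f 1%nat / (1 - r).
Proof.
  intros Hf Hr Hs. rewrite sm_shift.
  set (G := fun N => sm (fun i => f (S i)) N).
  assert (forall N, G (S N) <= f 1%nat + r * G N).
  { intros M. unfold G. rewrite sm_shift. rewrite <- sm_scal. apply Rplus_le_compat_l. apply sm_le. intros. apply Hs. lia. }
  assert (forall N, G N <= G (S N)) by (intros M; unfold G; simpl; pose proof (Hf (S M)); lra).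
  assert (G N * (1 - r) <= f 1%nat).
  { destruct N. unfold G; simpl. pose proof (Hf 1%nat). lra.
    specialize (H N). specialize (H0 N). pose proof (H0). nra. }
  fold (G N). apply Rplus_le_compat_l. apply Rmult_le_reg_r with (1 - r). lra.
  unfold Rdiv. rewrite Rmult_assoc, Rinv_l by lra. lra.
Qed.

Lemma a_pos u : 0 <= a u.
Proof. unfold a. pose proof xx_bounds. apply Rmult_le_pos. left; apply pow_lt; lra.
 left; apply Rinv_0_lt_compat, INR_fact_lt_0. Qed.

Lemma a_S u : a (S u) = a u * xx / ((2 * INR u + 1) * (2 * INR u + 2)).
Proof. unfold a. replace (2 * S u)%nat with (S (S (2 * u))) by lia.
 rewrite !fact_simpl, !mult_INR. replace (INR (S (S (2 * u)))) with (2 * INR u + 2) by (rewrite !S_INR, mult_INR; simpl; ring).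
 replace (INR (S (2 * u))) with (2 * INR u + 1) by (rewrite !S_INR, mult_INR; simpl; ring).
 pose proof (INR_fact_lt_0 (2 * u)). pose proof (pos_INR u). simpl pow. field. repeat split; lra. Qed.

Lemma ch_bound N : sm a (S N) <= 23/20.
Proof. pose proof xx_bounds.
 eapply Rle_trans. apply (geom a (xx/12)). apply a_pos. lra.
 - intros u Hu. rewrite a_S. assert (1 <= INR u) by (replace 1 with (INR 1) by reflexivity; apply le_INR; auto).
   pose proof (a_pos u).
   assert (12 <= (2 * INR u + 1) * (2 * INR u + 2)) by nra.
   unfold Rdiv. apply Rmult_le_reg_r with ((2 * INR u + 1) * (2 * INR u + 2)). nra.
   replace (a u * xx * / ((2 * INR u + 1) * (2 * INR u + 2)) * ((2 * INR u + 1) * (2 * INR u + 2))) with (a u * xx) by (field; nra). assert (0 <= a u * xx) by nra. nra.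
 - assert (a 0%nat = 1) by (unfold a; simpl; field). assert (a 1%nat = xx / 2) by (unfold a; simpl; field).
   rewrite H0, H1. apply Rmult_le_reg_r with (1 - xx/12). lra.
   replace ((1 + xx / 2 / (1 - xx / 12)) * (1 - xx / 12)) with (1 - xx/12 + xx/2) by (field; lra). lra.
Qed.

Definition mt (u : nat) : R := INR u * (INR u + 1) * a u.

Lemma M_bound N : sm mt (S N) <= 63/200.
Proof. pose proof xx_bounds.
 assert (Hp : forall u, 0 <= mt u) by (intros; unfold mt; pose proof (pos_INR u); pose proof (a_pos u); apply Rmult_le_pos; nra).
 eapply Rle_trans. apply (geom mt (xx/4)). auto. lra.
 - intros u Hu. unfold mt. rewrite a_S, S_INR. assert (1 <= INR u) by (replace 1 with (INR 1) by reflexivity; apply le_INR; auto).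
   pose proof (a_pos u).
   set (v := INR u) in *.
   assert (E : (v + 1) * (v + 1 + 1) * (a u * xx / ((2 * v + 1) * (2 * v + 2))) = (v * (v+1) * a u) * (xx * (v+2) / (v * (2*v+1) * (2*v+2)))) by (field; lra).
   rewrite E. rewrite (Rmult_comm (xx/4)). apply Rmult_le_compat_l. apply Rmult_le_pos; nra.
   apply Rmult_le_reg_r with (v * (2*v+1) * (2*v+2)). nra.
   unfold Rdiv. rewrite Rmult_assoc, Rinv_l by nra. 
   assert (4 * (v+2) <= v * (2*v+1) * (2*v+2)) by nra. nra.
 - assert (mt 0%nat = 0) by (unfold mt; simpl; ring). assert (mt 1%nat = xx) by (unfold mt, a; simpl; field).
   rewrite H0, H1. apply Rmult_le_reg_r with (1 - xx/4). lra.
   replace ((0 + xx / (1 - xx / 4)) * (1 - xx / 4)) with xx by (field; lra). lra.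
Qed.

Lemma outer s : (-1) ^ s * rising (1/2 - INR s) (s + 1) = 1/2 * cc s * INR (fact s).
Proof. rewrite Nat.add_1_r. induction s.
 - simpl. field.
 - rewrite rising_front. replace (1/2 - INR (S s) + 1) with (1/2 - INR s) by (rewrite S_INR; ring).
   change ((-1) ^ S s) with (-1 * (-1) ^ s).
   replace (-1 * (-1) ^ s * ((1 / 2 - INR (S s)) * rising (1 / 2 - INR s) (S s)))
     with ((INR (S s) - 1/2) * ((-1) ^ s * rising (1 / 2 - INR s) (S s))) by ring.
   rewrite IHs. rewrite cc_S, fact_simpl, mult_INR, S_INR. pose proof (pos_INR s). field. lra.
Qed.

Lemma inner s u : (-1) ^ u * rising (- INR s) u * INR (fact (s + 1)) = pi_ u s * INR (fact (s + u + 1)).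
Proof. induction u.
 - unfold pi_. simpl. rewrite Nat.add_0_r. field.
 - rewrite pi_S. change ((-1) ^ S u) with (-1 * (-1) ^ u).
   change (rising (- INR s) (S u)) with (rising (- INR s) u * (- INR s + INR u)).
   replace (s + S u + 1)%nat with (S (s + u + 1)) by lia. rewrite fact_simpl, mult_INR.
   replace (INR (S (s + u + 1))) with (INR s + INR u + 2) by (rewrite S_INR, !plus_INR; simpl; ring).
   replace (-1 * (-1) ^ u * (rising (- INR s) u * (- INR s + INR u)) * INR (fact (s + 1)))
     with ((INR s - INR u) * ((-1) ^ u * rising (- INR s) u * INR (fact (s + 1)))) by ring.
   rewrite IHu. pose proof (pos_INR s). pose proof (pos_INR u). field. lra.
Qed.

Lemma term s u :
  (-1) ^ u * rising (- INR s) u / (INR (fact (s + u + 1)) * INR (fact (2 * u))) * (PI ^ 2 / 36) ^ u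
  = a u * w u s / INR (fact s).
Proof.
  pose proof (inner s u). unfold a, w, xx.
  replace (s + 1)%nat with (S s) in H by lia. rewrite fact_simpl, mult_INR, S_INR in H.
  pose proof (INR_fact_lt_0 s). pose proof (INR_fact_lt_0 (s + u + 1)). pose proof (INR_fact_lt_0 (2 * u)).
  pose proof (pos_INR s).
  assert (pi_ u s = (-1) ^ u * rising (- INR s) u * ((INR s + 1) * INR (fact s)) / INR (fact (s + u + 1))).
  { replace (pi_ u s) with (pi_ u s * INR (fact (s+u+1)) / INR (fact (s+u+1))) by (field; lra). rewrite <- H. reflexivity. }
  rewrite H4. field. repeat split; lra.
Qed.

Lemma swap f n m : sm (fun s => sm (fun u => f s u) m) n = sm (fun u => sm (fun s => f s u) n) m.
Proof. induction n; simpl. induction m; simpl; auto. rewrite <- IHm; ring.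
 rewrite IHn. rewrite <- sm_plus. auto. Qed.

Lemma ext_zero f s N : (s <= N)%nat -> (forall u, (s < u)%nat -> f u = 0) -> sm f (S s) = sm f (S N).
Proof. intros H Hz. replace (S N) with (S s + (N - s))%nat by lia. rewrite sm_split.
 rewrite (sm_ext (fun i => f (S s + i)%nat) (fun _ => 0)). 2: { intros k Hk. apply Hz. lia. }
 assert (Z : forall m, sm (fun _ : nat => 0) m = 0) by (induction m; simpl; lra). rewrite Z. ring. Qed.

Lemma S4_rep t N : (t <= N)%nat -> S4 t = 1/2 * sm (fun u => a u * A u (S t)) (S N).
Proof.
  intros HN. unfold S4. rewrite sum_f_R0_sm.
  rewrite (sm_ext _ (fun s => sm (fun u => 1/2 * cc s * (a u * w u s)) (S N))).
  2: { intros s Hs. rewrite sum_f_R0_sm. rewrite outer.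
       rewrite (sm_ext _ (fun u => a u * w u s / INR (fact s))) by (intros; apply term).
       rewrite (ext_zero _ s N) by (try lia; intros u Hu; unfold w; rewrite pi_zero by lia; unfold Rdiv; ring).
       rewrite <- sm_scal. apply sm_ext. intros. pose proof (INR_fact_lt_0 s). field. lra. }
  rewrite swap. rewrite <- sm_scal. apply sm_ext. intros u _. unfold A. rewrite <- sm_scal. rewrite <- sm_scal.
  apply sm_ext. intros. ring.
Qed.

Lemma Dlem t : (-1) ^ t * falling (-3/2) t = 2 * (INR t + 1) * cc (S t) * INR (fact t).
Proof. induction t.
 - simpl. field.
 - change (falling (-3/2) (S t)) with (falling (-3/2) t * (-3/2 - INR t)).
   change ((-1) ^ S t) with (-1 * (-1) ^ t).
   replace (-1 * (-1) ^ t * (falling (-3 / 2) t * (-3 / 2 - INR t))) with ((INR t + 3/2) * ((-1) ^ t * falling (-3/2) t)) by field.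
   rewrite IHt. rewrite (cc_S (S t)), fact_simpl, mult_INR, !S_INR. pose proof (pos_INR t). field. lra.
Qed.

Lemma key t N : (1 <= t)%nat -> (t <= N)%nat ->
  cc (S t) * sm a (S N) - 1/3 * (cc (S t) / INR (S t)) * (63/200)
  <= sm (fun u => a u / (2 * INR u + 1)) (S N) - S4 t <= cc (S t) * sm a (S N).
Proof.
  intros Ht HN. rewrite (S4_rep t N HN).
  assert (E : sm (fun u => a u / (2 * INR u + 1)) (S N) - 1 / 2 * sm (fun u => a u * A u (S t)) (S N)
             = 1/2 * sm (fun u => a u * T u (S t)) (S N)).
  { rewrite <- !sm_scal, <- sm_minus. apply sm_ext. intros. unfold T. pose proof (pos_INR k). field. lra. }
  rewrite E. pose proof (cc_pos (S t)). assert (0 < INR (S t)) by (apply lt_0_INR; lia).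
  split.
  - pose proof (M_bound N).
    apply Rle_trans with (cc (S t) * sm a (S N) - 1/3 * (cc (S t) / INR (S t)) * sm mt (S N)).
    { assert (0 <= cc (S t) / INR (S t)) by (apply Rmult_le_pos; [lra|left; apply Rinv_0_lt_compat; lra]). nra. }
    replace (cc (S t) * sm a (S N) - 1/3 * (cc (S t) / INR (S t)) * sm mt (S N))
      with (1/2 * sm (fun u => a u * (2 * cc (S t) - 2/3 * (INR u * (INR u + 1)) * (cc (S t) / INR (S t)))) (S N)).
    2: { rewrite <- !sm_scal, <- sm_minus. apply sm_ext. intros. unfold mt. field. lra. }
    apply Rmult_le_compat_l. lra. apply sm_le. intros u _. apply Rmult_le_compat_l. apply a_pos.
    apply T_lower. lia.
  - replace (cc (S t) * sm a (S N)) with (1/2 * sm (fun u => a u * (2 * cc (S t))) (S N)).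
    2: { rewrite <- !sm_scal. apply sm_ext. intros. field. }
    apply Rmult_le_compat_l. lra. apply sm_le. intros u _. apply Rmult_le_compat_l. apply a_pos.
    apply T_upper.
Qed.

Lemma div_le X Y D : 0 < D -> X <= Y * D -> X / D <= Y.
Proof. intros. apply Rmult_le_reg_r with D. lra. unfold Rdiv. rewrite Rmult_assoc, Rinv_l by lra. lra. Qed.
Lemma le_div X Y D : 0 < D -> Y * D <= X -> Y <= X / D.
Proof. intros. apply Rmult_le_reg_r with D. lra. unfold Rdiv. rewrite Rmult_assoc, Rinv_l by lra. lra. Qed.

Lemma const_cv c : Un_cv (fun _ => c) c.
Proof. intros e He. exists O. intros. unfold Rdist. rewrite Rminus_diag, Rabs_R0. lra. Qed.

Lemma key_lim t : (1 <= t)%nat ->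
  cc (S t) * cosh alpha - 1/3 * (cc (S t) / INR (S t)) * (63/200)
  <= sinh alpha / alpha - S4 t <= cc (S t) * cosh alpha.
Proof.
  intros Ht. split.
  - apply (lim_le (fun N => cc (S t) * sm a (S N) - 1/3 * (cc (S t) / INR (S t)) * (63/200))
                  (fun N => sm (fun u => a u / (2 * INR u + 1)) (S N) - S4 t) _ _ t).
    + apply CV_minus. apply cv_scal. apply ch_cv. apply const_cv.
    + apply CV_minus. apply sh_cv. apply const_cv.
    + intros N HN. apply (key t N Ht HN).
  - apply (lim_le (fun N => sm (fun u => a u / (2 * INR u + 1)) (S N) - S4 t)
                  (fun N => cc (S t) * sm a (S N)) _ _ t).
    + apply CV_minus. apply sh_cv. apply const_cv.
    + apply cv_scal. apply ch_cv.
    + intros N HN. apply (key t N Ht HN).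
Qed.

Lemma cosh_bounds : 0 < cosh alpha <= 23/20.
Proof. split. unfold cosh. pose proof (exp_pos alpha). pose proof (exp_pos (- alpha)). lra.
 apply (lim_le (fun N => sm a (S N)) (fun _ => 23/20) _ _ O). apply ch_cv. apply const_cv.
 intros. apply ch_bound. Qed.

Theorem mainTheorem13 : forall t : nat, (1 <= t)%nat ->
  let B := gbinom (-3/2) t in
  let E := S4 t / ((-1) ^ t * B)
           - ((-1) ^ t / B) * (sinh alpha / alpha)
           + cosh alpha / (2 * INR t) in
  - (1 / (3 * INR t ^ 2)) < E /\ E < 13 / (20 * INR t ^ 2).
Proof.
  intros t Ht B E.
  pose proof (Dlem t) as HD.
  set (p := (-1) ^ t) in *.
  assert (Hp : p * p = 1).
  { unfold p. rewrite <- pow_add. replace (t + t)%nat with (2 * t)%nat by lia. apply pow_1_even. }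
  set (c := cc (S t)) in *. pose proof (cc_pos (S t)) as Hc. fold c in Hc.
  pose proof (INR_fact_lt_0 t) as Hf.
  assert (HT : 1 <= INR t) by (replace 1 with (INR 1) by reflexivity; apply le_INR; auto).
  set (D := 2 * (INR t + 1) * c).
  assert (HB : B = p * D).
  { assert (Hfa : falling (-3/2) t = p * (D * INR (fact t))).
    { rewrite <- (Rmult_1_l (falling _ _)), <- Hp, Rmult_assoc, HD. unfold D. ring. }
    unfold B, gbinom. rewrite Hfa. field. lra. }
  assert (HD0 : 0 < D) by (unfold D; nra).
  pose proof (key_lim t Ht) as [K1 K2]. fold c in K1, K2.
  rewrite S_INR in K1.
  set (L := sinh alpha / alpha) in *. set (X := L - S4 t) in *.
  set (ch := cosh alpha) in *. pose proof cosh_bounds as [C1 C2]. fold ch in C1, C2.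
  assert (HE : E = - X / D + ch / (2 * INR t)).
  { unfold E. rewrite HB. unfold X. rewrite <- (Rmult_assoc p p D), Hp, Rmult_1_l. field; repeat split; (lra || (intro Z; rewrite Z in Hp; lra)). }
  rewrite HE. set (T := INR t) in *.
  assert (HX1 : X / D <= ch / (2 * (T + 1))).
  { apply div_le. lra.
    unfold D. replace (ch / (2 * (T + 1)) * (2 * (T + 1) * c)) with (c * ch) by (field; lra). lra. }
  assert (HX2 : ch / (2 * (T + 1)) - 63/200 / (6 * (T + 1)^2) <= X / D).
  { apply le_div. lra.
    unfold D. replace ((ch / (2 * (T + 1)) - 63 / 200 / (6 * (T + 1) ^ 2)) * (2 * (T + 1) * c))
      with (c * ch - 1 / 3 * (c / (T + 1)) * (63 / 200)) by (field; lra). lra. }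
  split.
  - assert (ch / (2 * (T + 1)) < ch / (2 * T)).
    { apply Rmult_lt_compat_l. lra. apply Rinv_lt_contravar; nra. }
    assert (0 < 1 / (3 * T ^ 2)) by (apply Rdiv_lt_0_compat; [lra|nra]).
    unfold Rdiv at 1. lra.
  - assert (Hfin : ch / (2 * T) - ch / (2 * (T + 1)) + 63/200 / (6 * (T + 1)^2) < 13 / (20 * T ^ 2)).
    { assert (EQ : 13 / (20 * T ^ 2) - (ch / (2 * T) - ch / (2 * (T + 1)) + 63/200 / (6 * (T + 1)^2))
                 = (78 * (T+1)^2 - 60 * ch * T * (T+1) - 20 * (63/200) * T^2) / (120 * T^2 * (T+1)^2)) by (field; lra).
      assert (0 < (78 * (T+1)^2 - 60 * ch * T * (T+1) - 20 * (63/200) * T^2) / (120 * T^2 * (T+1)^2)).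
      { apply Rdiv_lt_0_compat. nra. assert (0 < T^2 * (T+1)^2) by (apply Rmult_lt_0_compat; nra). nra. }
      lra. }
    unfold Rdiv at 1. lra.
Qed.
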